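(* Let $x$ and $y$ be two infinite words over a finite alphabet $A$. Suppose there are symbols $c,c',d\in A$ and an increasing sequence of integers $(m_n)_{n\ge0}$ such that the limits $$\lim_{n\to\infty}\frac{|\{1\le i\le m_n: x[i]=c,\ y[i]=d\}|}{m_n}\quad\text{and}\quad \lim_{n\to\infty}\frac{|\{1\le i\le m_n: x[i]=c',\ y[i]=d\}|}{m_n}$$ exist and are different. Then $\rho(x/y)<1$.
   Context: $x[i]$ is the symbol at position $i$ (positions start at 1). A $k$-automaton $\langle Q,A,\delta,I\rangle$ has finite state set $Q$, transitions $\delta\subseteq Q\times(A\cup\{\varepsilon\})^k\times Q$, initial states $I$; an infinite run is accepting if it starts in $I$ and all label components are infinite. It is $2$-deterministic if $I$ is a singleton and, for two transitions from the same state with labels $(\alpha_i),(\alpha'_i)$, $\alpha_j=\varepsilon$ for some $j\le2$ implies $\alpha'_j=\varepsilon$, and $\alpha_1=\alpha'_1,\alpha_2=\alpha'_2$ implies $\alpha_3=\alpha'_3$ and equal targets. A compressor is a $2$-deterministic $3$-automaton $\mathcal C$ (input $x$, oracle $y$, output) such that for each fixed $y$ the map $x\mapsto\mathcal C(x,y)$ is injective. For the accepting run $q_0\xrightarrow{\alpha_1,\beta_1|w_1}q_1\cdots$ with $x=\alpha_1\alpha_2\cdots$, $y=\beta_1\beta_2\cdots$, $\rho_{\mathcal C}(x/y)=\liminf_n|w_1\cdots w_n|/|\alpha_1\cdots\alpha_n|$; $\rho(x/y)$ is the infimum over all compressors. *)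

(* Defs.v *)
From HB Require Import structures.
From mathcomp Require Import all_boot all_order all_algebra.
From mathcomp Require Import all_classical all_reals all_analysis.
Set Implicit Arguments. Unset Strict Implicit. Unset Printing Implicit Defensive.
Import Order.TTheory GRing.Theory Num.Theory.
Local Open Scope classical_set_scope.
Local Open Scope ring_scope.

(* Infinite words over A: w : nat -> A, where w i is the symbol at position i+1. *)

(* A transition label in (A ∪ {eps})^3 : (input, oracle, output); None = eps. *)
Definition label3 (A : finType) := (option A * option A * option A)%type.
Definition lab1 (A : finType) (l : label3 A) := l.1.1.
Definition lab2 (A : finType) (l : label3 A) := l.1.2.
Definition lab3 (A : finType) (l : label3 A) := l.2.

Record automaton3 (A : finType) (Q : finType) := Automaton3 {
  delta : Q -> label3 A -> Q -> bool;
  init : Q -> bool }.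

Definition two_deterministic (A Q : finType) (C : automaton3 A Q) : Prop :=
  (exists q0, forall q, init C q <-> q = q0) /\
  (forall p (a b : label3 A) q q', delta C p a q -> delta C p b q' ->
     (lab1 a = None -> lab1 b = None) /\ (lab2 a = None -> lab2 b = None) /\
     (lab1 a = lab1 b -> lab2 a = lab2 b -> lab3 a = lab3 b /\ q = q')).

Definition nsyms (A : finType) (s : nat -> option A) (n : nat) : nat :=
  \sum_(i < n) (s i != None).

(* the tape s (a sequence of labels in A ∪ {eps}) spells the infinite word w:
   infinitely many non-eps labels, and their concatenation is w *)
Definition spells (A : finType) (s : nat -> option A) (w : nat -> A) : Prop :=
  (forall N, exists k, (N <= k)%N /\ s k != None) /\
  (forall k a, s k = Some a -> w (nsyms s k) = a).

Definition accepting_run (A Q : finType) (C : automaton3 A Q)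
    (qs : nat -> Q) (ls : nat -> label3 A) (x y z : nat -> A) : Prop :=
  init C (qs 0%N) /\
  (forall k, delta C (qs k) (ls k) (qs k.+1)) /\
  spells (fun k => lab1 (ls k)) x /\
  spells (fun k => lab2 (ls k)) y /\
  spells (fun k => lab3 (ls k)) z.

Definition compressor (A Q : finType) (C : automaton3 A Q) : Prop :=
  two_deterministic C /\
  (forall y x x' z qs ls qs' ls',
     accepting_run C qs ls x y z -> accepting_run C qs' ls' x' y z -> x = x').

Definition run_ratio (R : realType) (A : finType) (ls : nat -> label3 A) (n : nat) : \bar R :=
  ((nsyms (fun k => lab3 (ls k)) n)%:R / (nsyms (fun k => lab1 (ls k)) n)%:R)%:E.

(* The set of values rho_C(x/y) = liminf of run_ratio, over all compressors C
   (state sets taken to be 'I_n, which loses no generality) and their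
   accepting runs on (x, y). *)
Definition rho_values (R : realType) (A : finType) (x y : nat -> A) : set (\bar R) :=
  [set r | exists (n : nat) (C : automaton3 A 'I_n) qs ls z,
     compressor C /\ accepting_run C qs ls x y z /\
     r = limn_einf (@run_ratio R A ls)].

Definition rho (R : realType) (A : finType) (x y : nat -> A) : \bar R :=
  ereal_inf (@rho_values R A x y).

(* |{1 <= i <= m : x[i] = c, y[i] = d}| / m  (positions shifted to 0-based) *)
Definition joint_freq (R : realType) (A : finType) (x y : nat -> A) (c d : A) (m : nat) : R :=
  (#|[set i : 'I_m | (x i == c) && (y i == d)]|)%:R / m%:R.

(* Main.v *)
Require Import Defs.
From HB Require Import structures.
From mathcomp Require Import all_boot all_order all_algebra.
From mathcomp Require Import all_classical all_reals all_analysis.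
From mathcomp Require Import zify ring lra.
Import Order.TTheory GRing.Theory Num.Theory.
Import numFieldNormedType.Exports.
Set Implicit Arguments. Unset Strict Implicit. Unset Printing Implicit Defensive.
Local Open Scope classical_set_scope.

Lemma nsymsS (A : finType) (s : nat -> option A) n :
  nsyms s n.+1 = (nsyms s n + (s n != None))%N.
Proof. by rewrite /nsyms big_ord_recr. Qed.

Lemma eq_nsyms (A : finType) (s s' : nat -> option A) n :
  (forall k, (k < n)%N -> s k = s' k) -> nsyms s n = nsyms s' n.
Proof. by move=> h; apply: eq_bigr => i _; rewrite h. Qed.

Lemma nsyms_mono (A : finType) (s : nat -> option A) k i :
  (nsyms s k <= nsyms s (k + i))%N.
Proof. elim: i => [|i IH]; first by rewrite addn0. by rewrite addnS nsymsS; lia. Qed.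

Lemma nsyms_inj (A : finType) (s : nat -> option A) k k' :
  s k != None -> s k' != None -> nsyms s k = nsyms s k' -> k = k'.
Proof.
wlog: k k' / (k <= k')%N.
  move=> W h1 h2 e; case: (leqP k k') => h; first exact: W.
  by apply/esym/W => //; apply: ltnW.
move=> le h1 h2 e; apply/eqP; rewrite eqn_leq le /=; rewrite leqNgt; apply/negP => lt.
have := nsyms_mono s k.+1 (k' - k.+1); rewrite subnKC // nsymsS h1 -e; lia.
Qed.

Lemma spells_ex (A : finType) (s : nat -> option A) (a0 : A) :
  (forall N, exists k, (N <= k)%N /\ s k != None) -> exists w, spells s w.
Proof.
move=> inf.
exists (fun m => xget a0 [set a | exists k, s k = Some a /\ nsyms s k = m]).
split => // k a ska /=.
set S := [set a | _].
case: (xgetP a0 S) => [b _ Sb|h]; last first.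
  by exfalso; apply: (h a); exists k.
case: Sb => k' [skb e].
have kk : k' = k.
  by apply: (@nsyms_inj _ s); [rewrite skb|rewrite ska|].
by move: skb; rewrite kk ska => -[].
Qed.

Section Transport.
Variables (A T : finType) (C : automaton3 A T).
Definition Cn : automaton3 A 'I_#|T| :=
  Automaton3 (fun p l q => delta C (enum_val p) l (enum_val q))
             (fun q => init C (enum_val q)).

Lemma run_to_n qs ls x y z :
  accepting_run C qs ls x y z -> accepting_run Cn (enum_rank \o qs) ls x y z.
Proof.
case=> i [d r]; split; first by rewrite /= enum_rankK.
split=> // k; by rewrite /= !enum_rankK.
Qed.

Lemma run_of_n qs ls x y z :
  accepting_run Cn qs ls x y z -> accepting_run C (enum_val \o qs) ls x y z.
Proof. by case=> i [d r]; split. Qed.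

Lemma compressor_n : compressor C -> compressor Cn.
Proof.
case=> [[[q0 hq0] hd] hi]; split; first split.
- exists (enum_rank q0) => q /=; split.
    by move/hq0 => <-; rewrite enum_valK.
  by move=> ->; apply/hq0; rewrite enum_rankK.
- by move=> p a b q q' /= h1 h2; have [? [? H]] := hd _ _ _ _ _ h1 h2; do 2!split => //;
   move=> e1 e2; have [-> e] := H e1 e2; split => //; exact: enum_val_inj.
- move=> y x x' z qs ls qs' ls' r1 r2.
  exact: (hi y x x' z _ _ _ _ (run_of_n r1) (run_of_n r2)).
Qed.
End Transport.

Section Block.
Variables (A : finType) (L : nat) (b0 : A) (kap : seq A -> seq A -> seq A).
Hypothesis HL : (0 < L)%N.
Hypothesis Hsize : forall w u, size u = L -> (0 < size (kap w u) <= L.+1)%N.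
Hypothesis Hinj : forall w u u' (f : nat -> A), size u = L -> size u' = L ->
  (forall i, (i < size (kap w u))%N -> f i = nth b0 (kap w u) i) ->
  (forall i, (i < size (kap w u'))%N -> f i = nth b0 (kap w u') i) -> u = u'.

Local Notation P := (L + L).+1.
Definition Tst := ('I_P * {ffun 'I_L -> A * A})%type.

Definition xs (buf : {ffun 'I_L -> A * A}) := [seq (buf i).1 | i <- enum 'I_L].
Definition ys (buf : {ffun 'I_L -> A * A}) := [seq (buf i).2 | i <- enum 'I_L].
Definition cwq (q : Tst) := kap (ys q.2) (xs q.2).
Definition outsym (q : Tst) : option A :=
  if (q.1 - L < size (cwq q))%N then Some (nth b0 (cwq q) (q.1 - L)) else None.
Definition nextr (r : 'I_P) : 'I_P := inord (if r.+1 == P then 0 else r.+1).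
Definition bufnil : {ffun 'I_L -> A * A} := [ffun => (b0, b0)].
Definition upd (buf : {ffun 'I_L -> A * A}) (r : nat) (p : A * A) :=
  [ffun i : 'I_L => if (i : nat) == r then p else buf i].
Definition q0 : Tst := (ord0, bufnil).
Definition stepR (q : Tst) a b : Tst := (nextr q.1, upd q.2 q.1 (a, b)).
Definition stepO (q : Tst) : Tst := (nextr q.1, if q.1.+1 == P then bufnil else q.2).
Definition deltaT (q : Tst) (l : label3 A) (q' : Tst) : bool :=
  match l with
  | (Some a, Some b, None) => (q.1 < L)%N && (q' == stepR q a b)
  | (None, None, o) => (L <= q.1)%N && (o == outsym q) && (q' == stepO q)
  | _ => false
  end.
Definition CT : automaton3 A Tst := Automaton3 deltaT (fun q => q == q0).

Definition stdlab (q : Tst) X Y : label3 A :=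
  if (q.1 < L)%N then (Some X, Some Y, None) else (None, None, outsym q).
Definition stdnext (q : Tst) X Y : Tst :=
  if (q.1 < L)%N then stepR q X Y else stepO q.

Lemma deltaT_std (q : Tst) (X Y : A) : deltaT q (stdlab q X Y) (stdnext q X Y).
Proof.
rewrite /stdlab /stdnext; case: ifP => h /=; first by rewrite h eqxx.
by rewrite leqNgt h !eqxx.
Qed.

Lemma deltaT_shape (q : Tst) l (q' : Tst) : deltaT q l q' ->
  if (q.1 < L)%N then exists a b, l = (Some a, Some b, None) /\ q' = stepR q a b
  else l = (None, None, outsym q) /\ q' = stepO q.
Proof.
move: l => [[[a | ] [b | ]] [oo | ]] //=.
- by case/andP => -> /eqP ->; exists a, b.
- by case/andP => /andP [h /eqP ->] /eqP ->; rewrite ltnNge h.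
- by case/andP => /andP [h /eqP ->] /eqP ->; rewrite ltnNge h.
Qed.

Lemma deltaT_inv (q : Tst) l (q' : Tst) (X Y : A) : deltaT q l q' ->
  (forall a, lab1 l = Some a -> a = X) -> (forall b, lab2 l = Some b -> b = Y) ->
  l = stdlab q X Y /\ q' = stdnext q X Y.
Proof.
move=> /deltaT_shape; rewrite /stdlab /stdnext; case: ifP => _.
  by move=> [a [b [-> ->]]] h1 h2; rewrite (h1 a) // (h2 b).
by move=> [-> ->].
Qed.

Lemma stdlab_eq (q : Tst) (X Y X' Y' : A) : ((q.1 < L)%N -> X = X' /\ Y = Y') ->
  stdlab q X Y = stdlab q X' Y' /\ stdnext q X Y = stdnext q X' Y'.
Proof. by rewrite /stdlab /stdnext; case: ifP => // h /(_ isT) [-> ->]. Qed.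

Definition xblk (x : nat -> A) j := mkseq (fun i => x (j * L + i)%N) L.
Definition cw x y j := kap (xblk y j) (xblk x j).
Definition bufC (x y : nat -> A) j r : {ffun 'I_L -> A * A} :=
  [ffun i : 'I_L => if (i < r)%N then (x (j * L + i)%N, y (j * L + i)%N) else (b0, b0)].
Definition qsC x y k : Tst := (inord (k %% P), bufC x y (k %/ P) (k %% P)).
Definition XC (x : nat -> A) k := x (k %/ P * L + k %% P)%N.
Definition lsC x y k := stdlab (qsC x y k) (XC x k) (XC y k).
Definition Ocum x y j := (\sum_(i < j) size (cw x y i))%N.

Lemma size_xblk x j : size (xblk x j) = L.
Proof. by rewrite size_mkseq. Qed.

Lemma xs_bufC x y j r : (L <= r)%N -> xs (bufC x y j r) = xblk x j.
Proof.
move=> h; rewrite /xs /xblk /mkseq -val_enum_ord -map_comp; apply: eq_map => i /=.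
by rewrite ffunE (leq_trans (ltn_ord i) h).
Qed.

Lemma ys_bufC x y j r : (L <= r)%N -> ys (bufC x y j r) = xblk y j.
Proof.
move=> h; rewrite /ys /xblk /mkseq -val_enum_ord -map_comp; apply: eq_map => i /=.
by rewrite ffunE (leq_trans (ltn_ord i) h).
Qed.

Lemma qsC1 x y k : ((qsC x y k).1 : nat) = k %% P.
Proof. by rewrite /= inordK // ltn_pmod. Qed.

Lemma cwq_qsC x y k : (L <= k %% P)%N -> cwq (qsC x y k) = cw x y (k %/ P).
Proof. by move=> h; rewrite /cwq /= xs_bufC // ys_bufC. Qed.

Lemma divmodS_lt k : ((k %% P).+1 < P)%N -> k.+1 %/ P = k %/ P /\ k.+1 %% P = (k %% P).+1.
Proof.
move=> h; have e : k.+1 = (k %/ P * P + (k %% P).+1)%N by rewrite {1}(divn_eq k P) addnS.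
rewrite e; split.
  by rewrite divnMDl // (divn_small h) addn0.
by rewrite modnMDl (modn_small h).
Qed.

Lemma divmodS_eq k : (k %% P).+1 = P -> k.+1 %/ P = (k %/ P).+1 /\ k.+1 %% P = 0%N.
Proof.
move=> h; have e : k.+1 = (k %/ P * P + P)%N by move: (divn_eq k P) h; lia.
rewrite e; split; first by rewrite divnMDl // divnn addn1.
by rewrite modnMDl modnn.
Qed.

Lemma divmod_cases k :
  (((k %% P).+1 < P)%N /\ k.+1 %/ P = k %/ P /\ k.+1 %% P = (k %% P).+1) \/
  ((k %% P).+1 = P /\ k.+1 %/ P = (k %/ P).+1 /\ k.+1 %% P = 0%N).
Proof.
case: (ltnP (k %% P).+1 P) => h; first by left; split => //; exact: divmodS_lt.
have e : (k %% P).+1 = P by apply/eqP; rewrite eqn_leq h ltn_pmod.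
by right; split => //; exact: divmodS_eq.
Qed.

Lemma qsC_step x y k : qsC x y k.+1 = stdnext (qsC x y k) (XC x k) (XC y k).
Proof.
rewrite /stdnext qsC1 /stepR /stepO /nextr.
have lt : (k %% P < P)%N by rewrite ltn_pmod.
have -> : ((qsC x y k).1 : nat) = k %% P by rewrite qsC1.
case: (divmod_cases k) => [[h [e1 e2]]|[h [e1 e2]]].
- rewrite /qsC e1 e2 (ltn_eqF h).
  case: ifP => hr.
    congr pair; apply/ffunP => i; rewrite !ffunE /XC.
    rewrite ltnS leq_eqVlt; case: eqP => [->|] //=.
  rewrite /=; congr pair; apply/ffunP => i; rewrite !ffunE.
  have : (L <= k %% P)%N by rewrite leqNgt hr.
  move=> hL; rewrite (leq_trans (ltn_ord i) hL) (leq_trans (ltn_ord i)) //.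
  exact: leqW.
- have hL : (k %% P < L)%N = false.
    by apply/negbTE; rewrite -leqNgt; move: h; lia.
  rewrite /qsC e1 e2 hL h eqxx; congr pair; try by apply/ffunP => i; rewrite !ffunE.
Qed.

Lemma deltaC x y k : deltaT (qsC x y k) (lsC x y k) (qsC x y k.+1).
Proof. by rewrite qsC_step; exact: deltaT_std. Qed.

Lemma lab1_lsC x y k : (lab1 (lsC x y k) != None) = (k %% P < L)%N.
Proof. by rewrite /lsC /stdlab qsC1; case: ifP. Qed.

Lemma lab2_lsC x y k : (lab2 (lsC x y k) != None) = (k %% P < L)%N.
Proof. by rewrite /lsC /stdlab qsC1; case: ifP. Qed.

Lemma lab3_lsC x y k : lab3 (lsC x y k) =
  if (L <= k %% P)%N && (k %% P - L < size (cw x y (k %/ P)))%N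
  then Some (nth b0 (cw x y (k %/ P)) (k %% P - L)) else None.
Proof.
rewrite /lsC /stdlab (qsC1 x y k); case: (leqP L (k %% P)) => h //=.
by rewrite /outsym qsC1 cwq_qsC.
Qed.

Lemma nsyms_in x y k :
  nsyms (fun k => lab1 (lsC x y k)) k = (k %/ P * L + minn (k %% P) L)%N.
Proof.
elim: k => [|k IH]; first by rewrite /nsyms big_ord0 div0n mod0n mul0n min0n.
rewrite nsymsS IH lab1_lsC.
case: (divmod_cases k) => [[h [e1 e2]]|[h [e1 e2]]]; rewrite e1 e2.
  by case: (ltnP (k %% P) L) => hh; lia.
rewrite mulSn; move: h; lia.
Qed.

Lemma nsyms_in2 x y k :
  nsyms (fun k => lab2 (lsC x y k)) k = nsyms (fun k => lab1 (lsC x y k)) k.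
Proof. by apply: eq_bigr => i _; rewrite lab1_lsC lab2_lsC. Qed.

Lemma nsyms_out x y k :
  nsyms (fun k => lab3 (lsC x y k)) k =
  (Ocum x y (k %/ P) + minn (k %% P - L) (size (cw x y (k %/ P))))%N.
Proof.
elim: k => [|k IH]; first by rewrite /nsyms /Ocum !big_ord0 div0n mod0n sub0n min0n.
rewrite nsymsS IH lab3_lsC.
case: (divmod_cases k) => [[h [e1 e2]]|[h [e1 e2]]]; rewrite e1 e2.
  case: (leqP L (k %% P)) => h1 /=; last by lia.
  by case: (ltnP (k %% P - L) (size (cw x y (k %/ P)))) => h2 /=; lia.
rewrite /Ocum big_ord_recr /=.
have := Hsize (xblk y (k %/ P)) (size_xblk x (k %/ P)); rewrite -/(cw x y _).
move: h; case: (leqP L (k %% P)) => h1 /=; last by lia.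
by case: (ltnP (k %% P - L) (size (cw x y (k %/ P)))) => h2 /=; lia.
Qed.

Lemma spells_inC x y : spells (fun k => lab1 (lsC x y k)) x.
Proof.
split.
  move=> N; exists (N * P)%N; split; first by rewrite leq_pmulr.
  by rewrite lab1_lsC modnMl.
move=> k a; rewrite /lsC /stdlab qsC1; case: ifP => h //= [<-].
by rewrite nsyms_in /XC; congr x; lia.
Qed.

Lemma spells_yC x y : spells (fun k => lab2 (lsC x y k)) y.
Proof.
split.
  move=> N; exists (N * P)%N; split; first by rewrite leq_pmulr.
  by rewrite lab2_lsC modnMl.
move=> k a; rewrite /lsC /stdlab qsC1; case: ifP => h //= [<-].
by rewrite nsyms_in2 nsyms_in /XC; congr y; lia.
Qed.

Lemma inf_outC x y N : exists k, (N <= k)%N /\ lab3 (lsC x y k) != None.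
Proof.
exists (N * P + L)%N; split; first by nia.
have hm : (N * P + L) %% P = L by rewrite modnMDl modn_small //; lia.
have hd : (N * P + L) %/ P = N by rewrite divnMDl // divn_small ?addn0 //; lia.
rewrite lab3_lsC hm hd leqnn subnn.
by have := Hsize (xblk y N) (size_xblk x N); rewrite -/(cw x y _) => /andP [-> _].
Qed.

Lemma z_cw x y z : spells (fun k => lab3 (lsC x y k)) z ->
  forall j t, (t < size (cw x y j))%N -> z (Ocum x y j + t)%N = nth b0 (cw x y j) t.
Proof.
move=> [_ sp] j t ht.
have hs := Hsize (xblk y j) (size_xblk x j); rewrite -/(cw x y _) in hs.
have hm : (j * P + (L + t)) %% P = (L + t)%N by rewrite modnMDl modn_small //; lia.
have hd : (j * P + (L + t)) %/ P = j by rewrite divnMDl // divn_small ?addn0 //; lia.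
have := sp (j * P + (L + t))%N (nth b0 (cw x y j) t).
rewrite lab3_lsC hm hd leq_addr addKn ht nsyms_out hm hd addKn => /(_ erefl).
by have -> : minn t (size (cw x y j)) = t by lia.
Qed.

Lemma qsC0 x y : qsC x y 0 = q0.
Proof.
rewrite /qsC /q0 mod0n div0n; congr pair; first by apply: val_inj; rewrite /= inordK.
all: try by apply/ffunP => i; rewrite !ffunE.
Qed.

Lemma run_canon qs ls x y z : accepting_run CT qs ls x y z ->
  forall k, qs k = qsC x y k /\ ls k = lsC x y k.
Proof.
move=> [i0 [dl [s1 [s2 s3]]]].
suff H : forall n, qs n = qsC x y n /\ forall k, (k < n)%N -> ls k = lsC x y k.
  by move=> k; split; [case: (H k)| case: (H k.+1) => _; apply].
elim => [|n [IHq IHl]].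
  by split => //; move: i0 => /= /eqP ->; rewrite qsC0.
have e1 : nsyms (fun k => lab1 (ls k)) n = nsyms (fun k => lab1 (lsC x y k)) n.
  by apply: eq_nsyms => k hk; rewrite IHl.
have e2 : nsyms (fun k => lab2 (ls k)) n = nsyms (fun k => lab2 (lsC x y k)) n.
  by apply: eq_nsyms => k hk; rewrite IHl.
have := deltaT_inv (X := x (nsyms (fun k => lab1 (lsC x y k)) n))
                   (Y := y (nsyms (fun k => lab2 (lsC x y k)) n)) (dl n).
rewrite IHq => /(_ _ _) [].
- by move=> a h; rewrite -e1; case: s1 => _ /(_ n a h).
- by move=> b h; rewrite -e2; case: s2 => _ /(_ n b h).
move=> hl hq.
have [E1 E2] : stdlab (qsC x y n) (x (nsyms (fun k => lab1 (lsC x y k)) n))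
        (y (nsyms (fun k => lab2 (lsC x y k)) n)) = lsC x y n /\
    stdnext (qsC x y n) (x (nsyms (fun k => lab1 (lsC x y k)) n))
        (y (nsyms (fun k => lab2 (lsC x y k)) n)) = qsC x y n.+1.
  rewrite qsC_step; apply: stdlab_eq; rewrite qsC1 => h.
  by rewrite nsyms_in2 nsyms_in /XC; split; congr (_ _); lia.
split; first by rewrite hq.
move=> k; rewrite ltnS leq_eqVlt => /orP [/eqP ->|/IHl //]; by rewrite hl.
Qed.

Lemma CT_compressor : compressor CT.
Proof.
split; first split.
- by exists q0 => q /=; split => /eqP.
- move=> p a b q q' /deltaT_shape h1 /deltaT_shape h2.
  move: h1 h2; case: ifP => _.
    move=> [a1 [a2 [-> ->]]] [b1 [b2 [-> ->]]] /=; do 2!split => //.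
    by move=> [->] [->].
  by move=> [-> ->] [-> ->].
move=> y x x' z qs ls qs' ls' r1 r2.
have c1 := run_canon r1; have c2 := run_canon r2.
have o1 : spells (fun k => lab3 (lsC x y k)) z.
  have -> : (fun k => lab3 (lsC x y k)) = (fun k => lab3 (ls k)).
    by apply: funext => k; case: (c1 k) => _ ->.
  by case: r1 => _ [_ [_ [_ ]]].
have o2 : spells (fun k => lab3 (lsC x' y k)) z.
  have -> : (fun k => lab3 (lsC x' y k)) = (fun k => lab3 (ls' k)).
    by apply: funext => k; case: (c2 k) => _ ->.
  by case: r2 => _ [_ [_ [_ ]]].
have blk : forall n j, (j < n)%N -> xblk x j = xblk x' j.
  elim => [//|n IH] j; rewrite ltnS leq_eqVlt => /orP [/eqP ->|/IH //].
  have eO : Ocum x y n = Ocum x' y n.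
    by apply: eq_bigr => i _; rewrite /cw IH.
  apply: (Hinj (w := xblk y n) (f := fun t => z (Ocum x y n + t)%N)).
  - exact: size_xblk.
  - exact: size_xblk.
  - by move=> t ht; rewrite (z_cw o1).
  - by move=> t ht; rewrite eO (z_cw o2).
apply: funext => p.
have := congr1 (fun s => nth b0 s (p %% L)) (blk (p %/ L).+1 (p %/ L) (ltnSn _)).
by rewrite /= !nth_mkseq ?ltn_pmod // -divn_eq.
Qed.

Lemma canon_run x y : exists z, accepting_run CT (qsC x y) (lsC x y) x y z.
Proof.
have [z hz] := spells_ex b0 (inf_outC x y).
exists z; split; first by rewrite /= qsC0.
split; first exact: deltaC.
split; first exact: spells_inC.
by split; [exact: spells_yC|].
Qed.

Lemma ratio_at (R : realType) x y j :
  @run_ratio R A (lsC x y) (j * P)%N = ((Ocum x y j)%:R / (j * L)%:R)%:E.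
Proof.
rewrite /run_ratio nsyms_out nsyms_in mulnK // modnMl.
by rewrite sub0n !min0n !addn0.
Qed.

End Block.

Section Code.
Local Open Scope ring_scope.
Variables (R : realType) (A : finType) (c c' d : A).

Definition xi (b a : A) : R := if b == d then (a == c)%:R - (a == c')%:R else 0.
Fixpoint Dv (w u : seq A) : R :=
  match w, u with b :: w', a :: u' => xi b a + Dv w' u' | _, _ => 0 end.
Fixpoint alls (n : nat) : seq (seq A) :=
  if n is n'.+1 then [seq a :: v | a <- enum A, v <- alls n'] else [:: [::]].
Definition kA := size (enum A).

Lemma size_alls n : size (alls n) = (kA ^ n)%N.
Proof. by elim: n => //= n IH; rewrite size_allpairs IH expnS. Qed.

Lemma mem_alls n u : (u \in alls n) = (size u == n).
Proof.
elim: n u => [|n IH] u /=; first by rewrite inE; case: u.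
apply/allpairsP/idP => [[[a v] /= [_ hv ->]]|]; first by rewrite /= eqSS -IH.
case: u => // a v /= hv; exists (a, v); split => //; first by rewrite mem_enum.
by rewrite IH.
Qed.

Lemma uniq_alls n : uniq (alls n).
Proof.
elim: n => //= n IH; apply: allpairs_uniq => //; first exact: enum_uniq.
by move=> [a v] [a' v'] _ _ /= [-> ->].
Qed.

Lemma sum_eq1 (s : seq A) (e : A) : uniq s -> e \in s ->
  \sum_(a <- s) ((a == e)%:R : R) = 1.
Proof.
move=> us es; rewrite (big_rem e) //= eqxx big1_seq ?addr0 // => a /andP [_ ha].
by case: eqP ha => // ->; rewrite mem_rem_uniqF.
Qed.

Lemma sum_cst_seq (T : Type) (s : seq T) (x : R) : \sum_(v <- s) x = x *+ size s.
Proof. by elim: s => [|a s IH]; rewrite ?big_nil ?big_cons ?IH ?mulrS. Qed.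

Lemma sum_xi b : \sum_(a <- enum A) xi b a = 0.
Proof.
rewrite /xi; case: eqP => _; last by rewrite big1.
by rewrite sumrB !sum_eq1 ?enum_uniq ?mem_enum ?subrr.
Qed.

Lemma xi2_le b a : xi b a ^+ 2 <= (a == c)%:R + (a == c')%:R.
Proof.
rewrite /xi; case: (b == d); last by rewrite expr2 mulr0 addr_ge0.
by case: (a == c); case: (a == c'); rewrite /= ?subrr ?subr0 ?sub0r ?expr2 ?mulr0; lra.
Qed.

Lemma sum_xi2 b : \sum_(a <- enum A) xi b a ^+ 2 <= 2.
Proof.
apply: (le_trans (ler_sum _ (fun a _ => xi2_le b a))).
by rewrite big_split /= !sum_eq1 ?enum_uniq ?mem_enum.
Qed.

Lemma kA_gt0 : (0 < kA)%N.
Proof. by rewrite /kA -has_predT; apply/hasP; exists c; rewrite ?mem_enum. Qed.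

Lemma S_bound n : forall w, \sum_(u <- alls n) Dv w u ^+ 2 <= (2 * n * kA ^ n)%:R.
Proof.
elim: n => [|n IH] w.
  rewrite /= big_seq1; have -> : Dv w [::] = 0 by case: w.
  by rewrite expr2 mulr0 muln0.
rewrite /= big_allpairs_dep /=; case: w => [|b w].
  rewrite big1 // => a _; rewrite big1 // => v _; by rewrite expr2 mulr0.
have E : forall a, \sum_(v <- alls n) (xi b a + Dv w v) ^+ 2 =
   xi b a ^+ 2 * (kA ^ n)%:R + 2 * (xi b a * \sum_(v <- alls n) Dv w v) +
   \sum_(v <- alls n) Dv w v ^+ 2.
  move=> a; rewrite -(size_alls n) mulr_natr -sum_cst_seq mulr_sumr mulr_sumr -!big_split /=.
  by apply: eq_bigr => v _; rewrite sqrrD mulr_natl.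
rewrite /= (eq_bigr _ (fun a _ => E a)) big_split big_split /=.
rewrite -mulr_suml -mulr_sumr -mulr_suml sum_xi mul0r mulr0 addr0 sum_cst_seq -/kA.
rewrite -[_ *+ kA]mulr_natr.
apply: (le_trans (lerD (ler_wpM2r _ (sum_xi2 b)) (ler_wpM2r _ (IH w)))) => //.
rewrite -!natrM -natrD ler_nat expnS.
have := kA_gt0; move: (kA ^ n)%N => K; nia.
Qed.

Lemma markovG L w (t : R) : 0 < t ->
  (size [seq u <- alls L | t <= Dv w u])%:R * t ^+ 2 <= \sum_(u <- alls L) Dv w u ^+ 2.
Proof.
move=> t0; rewrite size_filter mulr_natl.
rewrite (bigID (fun u => t <= Dv w u)) /=.
have -> : t ^+ 2 *+ count (fun u => t <= Dv w u) (alls L) =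
   \sum_(u <- alls L | t <= Dv w u) t ^+ 2.
  rewrite big_const_seq; elim: (count _ _) => [|m IH] //=; by rewrite mulrS IH.
rewrite -[X in X <= _]addr0 lerD //.
  by apply: ler_sum => u h; have t0' := ltW t0; rewrite !expr2; nra.
by apply: sumr_ge0 => u _; exact: sqr_ge0.
Qed.

Variables (L s : nat) (t : R).
Definition Gw w := [seq u <- alls L | t <= Dv w u].
Definition kap w u :=
  if t <= Dv w u then c :: nth [::] (alls s) (index u (Gw w)) else c' :: u.

Hypothesis cc' : c != c'.
Hypothesis HG : forall w, (size (Gw w) <= kA ^ s)%N.

Lemma kap_good w u : size u = L -> t <= Dv w u -> size (kap w u) = s.+1.
Proof.
move=> su h; rewrite /kap h /=.
have uG : u \in Gw w by rewrite mem_filter h mem_alls su eqxx.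
have hi : (index u (Gw w) < size (alls s))%N.
  by rewrite size_alls; apply: (@leq_trans (size (Gw w))); [rewrite index_mem | exact: HG].
by have := mem_nth [::] hi; rewrite mem_alls => /eqP ->.
Qed.

Lemma kap_bad w u : ~~ (t <= Dv w u) -> size (kap w u) = (size u).+1.
Proof. by rewrite /kap => /negbTE ->. Qed.

Lemma eq_from_f (b0 : A) (f : nat -> A) (s1 s2 : seq A) : size s1 = size s2 ->
  (forall i, (i < size s1)%N -> f i = nth b0 s1 i) ->
  (forall i, (i < size s2)%N -> f i = nth b0 s2 i) -> s1 = s2.
Proof.
move=> e h1 h2; apply: (eq_from_nth (x0 := b0) e) => i hi.
by rewrite -h1 // h2 // -e.
Qed.

Lemma kap_inj (b0 : A) w u u' (f : nat -> A) : size u = L -> size u' = L ->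
  (forall i, (i < size (kap w u))%N -> f i = nth b0 (kap w u) i) ->
  (forall i, (i < size (kap w u'))%N -> f i = nth b0 (kap w u') i) -> u = u'.
Proof.
move=> su su' h1 h2.
have F : forall u1, (forall i, (i < size (kap w u1))%N -> f i = nth b0 (kap w u1) i) ->
    f 0%N = if t <= Dv w u1 then c else c'.
  by move=> u1 h; rewrite h; rewrite /kap; case: ifP.
have F1 := F u h1; have F2 := F u' h2.
have idx : forall v, v \in Gw w -> (index v (Gw w) < size (alls s))%N.
  move=> v hv; rewrite size_alls; apply: (@leq_trans (size (Gw w))).
    by rewrite index_mem.
  exact: HG.
case g1: (t <= Dv w u); case g2: (t <= Dv w u'); rewrite ?g1 ?g2 in F1 F2.
- have E : kap w u = kap w u'.
    apply: (eq_from_f (b0 := b0) (f := f)) => //.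
    by rewrite !kap_good.
  have uG : u \in Gw w by rewrite mem_filter g1 mem_alls su eqxx.
  have uG' : u' \in Gw w by rewrite mem_filter g2 mem_alls su' eqxx.
  move: E; rewrite /kap g1 g2 => -[] /eqP.
  rewrite (nth_uniq _ (idx _ uG) (idx _ uG') (uniq_alls s)) => /eqP e.
  by have := nth_index [::] uG; rewrite e nth_index.
- by move: cc'; rewrite -F1 -F2 eqxx.
- by move: cc'; rewrite -F1 -F2 eqxx.
- have E : kap w u = kap w u'.
    apply: (eq_from_f (b0 := b0) (f := f)) => //.
    by rewrite !kap_bad ?g1 ?g2 // su su'.
  by move: E; rewrite /kap g1 g2 => -[].
Qed.

End Code.

Section Aux.
Local Open Scope ring_scope.
Variables (R : realType) (A : finType) (c c' d : A).

Lemma Dv_iota (f g : nat -> A) a n :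
  Dv R c c' d (map f (iota a n)) (map g (iota a n)) =
  \sum_(a <= i < a + n) xi R c c' d (f i) (g i).
Proof.
elim: n a => [|n IH] a /=; first by rewrite addn0 big_geq.
by rewrite IH big_ltn ?addnS ?ltnS ?leq_addr // addSn.
Qed.

Lemma xblk_iota L (x : nat -> A) j : xblk L x j = map x (iota (j * L) L).
Proof.
rewrite /xblk /mkseq; have -> : iota (j * L) L = iota (j * L + 0) L by rewrite addn0.
by rewrite iotaDl -map_comp.
Qed.

Lemma Dv_blk L (x y : nat -> A) j :
  Dv R c c' d (xblk L y j) (xblk L x j) =
  \sum_(j * L <= i < j * L + L) xi R c c' d (y i) (x i).
Proof. by rewrite !xblk_iota Dv_iota. Qed.

Lemma sum_blocks L (F : nat -> R) M :
  \sum_(j < M) \sum_(j * L <= i < j * L + L) F i = \sum_(0 <= i < M * L) F i.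
Proof.
elim: M => [|M IH]; first by rewrite big_ord0 mul0n big_geq.
by rewrite big_ord_recr /= IH mulSn (addnC L) -big_cat_nat //= leq_addr.
Qed.

Lemma Dv_le w u : Dv R c c' d w u <= (size u)%:R.
Proof.
elim: w u => [|b w IH] [|a u] //=; rewrite -addn1 natrD addrC lerD //.
rewrite /xi; case: (b == d) => //.
by case: (a == c); case: (a == c'); rewrite /= ?subr0 ?sub0r ?subrr //; lra.
Qed.

Lemma xi_le1 b a : xi R c c' d b a <= 1.
Proof.
rewrite /xi; case: (b == d) => //.
by case: (a == c); case: (a == c'); rewrite /= ?subr0 ?sub0r ?subrr //; lra.
Qed.

End Aux.

Lemma liminf_le (R : realType) (u : nat -> \bar R) (r : \bar R) :
  (forall N, exists n, (N <= n)%N /\ (u n <= r)%E) -> (limn_einf u <= r)%E.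
Proof.
move=> h; rewrite limn_einf_lim; apply: lime_le; first exact: is_cvg_einfs.
apply: nearW => N; have [n [Nn un]] := h N.
apply: (le_trans _ un); apply: ereal_inf_lbound; by exists n.
Qed.

Section Main.
Local Open Scope ring_scope.
Variables (R : realType) (A : finType) (x y : nat -> A) (c c' d : A) (m : nat -> nat).
Hypothesis mono : forall n, (m n < m n.+1)%N.

Definition Dl (N : nat) : R := \sum_(0 <= i < N) xi R c c' d (y i) (x i).

Lemma card_sum N (P : nat -> bool) :
  (#|[set i : 'I_N | P i]|)%:R = \sum_(0 <= i < N) (P i)%:R :> R.
Proof.
rewrite -sum1_card natr_sum big_mkcond /= big_mkord; apply: eq_bigr => i _.
by rewrite unfold_in /= asboolb; case: (P i).
Qed.

Lemma jf_diff N : joint_freq R x y c d N - joint_freq R x y c' d N = Dl N / N%:R.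
Proof.
rewrite /joint_freq -mulrBl (card_sum _ (fun i => (x i == c) && (y i == d))).
rewrite (card_sum _ (fun i => (x i == c') && (y i == d))) -sumrB /Dl; congr (_ * _).
apply: eq_bigr => i _; rewrite /xi; case: (y i == d); rewrite ?andbT ?andbF //.
by rewrite subrr.
Qed.

Lemma m_ge n : (n <= m n)%N.
Proof. elim: n => // n IH; exact: leq_ltn_trans IH (mono n). Qed.

Lemma Dl_step N1 N2 : (N1 <= N2)%N -> Dl N2 <= Dl N1 + (N2 - N1)%:R.
Proof.
move=> h; rewrite /Dl (big_cat_nat (leq0n N1) h) /= lerD2l.
apply: (le_trans (ler_sum _ (fun i _ => xi_le1 _ _ _ _ _ _))).
by rewrite sumr_const_nat.
Qed.


Lemma HG_bound L e (dl : R) : 0 < dl -> (0 < L)%N -> (e <= L)%N ->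
  8 * (kA A ^ e)%:R <= dl ^+ 2 * L%:R ->
  forall w, (size (Gw c c' d L (dl * L%:R / 2) w) <= kA A ^ (L - e))%N.
Proof.
move=> dl0 L0 eL h8 w.
set t := dl * L%:R / 2.
have Lr0 : 0 < L%:R :> R by rewrite ltr0n.
have t0 : 0 < t by rewrite /t divr_gt0 // mulr_gt0.
have h1 := markovG c c' d L w t0.
have h2 := S_bound R c c' d L w.
have hk : (kA A ^ L)%:R = (kA A ^ (L - e))%:R * (kA A ^ e)%:R :> R.
  by rewrite -natrM -expnD subnK.
rewrite -(ler_nat R).
have tt : t ^+ 2 = dl ^+ 2 * L%:R ^+ 2 / 4 by rewrite /t; field.
have K0 : 0 <= (kA A ^ (L - e))%:R :> R by [].
have H : (size (Gw c c' d L t w))%:R * t ^+ 2 <= (kA A ^ (L - e))%:R * t ^+ 2.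
  apply: (le_trans h1); apply: (le_trans h2).
  rewrite natrM natrM hk tt.
  set G := (kA A ^ (L - e))%:R; set Ke := (kA A ^ e)%:R.
  have : 0 <= G * L%:R by rewrite mulr_ge0.
  move=> GL; nra.
by rewrite ler_pM2r ?exprn_gt0 in H.
Qed.


Lemma block_bound L e (dl : R) M n : (0 < L)%N -> (e <= L)%N -> c != c' ->
  (forall w, (size (Gw c c' d L (dl * L%:R / 2) w) <= kA A ^ (L - e))%N) ->
  0 < dl -> 6 <= e%:R * dl -> (e <= M)%N -> M = (m n %/ L)%N ->
  dl * (m n)%:R < Dl (m n) ->
  (Ocum L (kap c c' d L (L - e) (dl * L%:R / 2)) x y M)%:R <= (M * L)%:R - M%:R :> R.
Proof.
move=> L0 eL cc HG dl0 e6 eM hM hD.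
set t := dl * L%:R / 2.
set K := kap c c' d L (L - e) t.
have Lr0 : 0 < L%:R :> R by rewrite ltr0n.
have t0 : 0 < t by rewrite /t divr_gt0 // mulr_gt0.
pose good := fun j : nat => (t <= Dv R c c' d (xblk L y j) (xblk L x j)).
have hsz : forall j, (size (cw L K x y j))%:R =
    (L + 1)%:R - e%:R * (good j)%:R :> R.
  move=> j; rewrite /cw /good.
  case: (boolP (t <= Dv R c c' d (xblk L y j) (xblk L x j))) => g.
    rewrite (kap_good HG (size_xblk _ _ _) g) mulr1.
    rewrite -addn1 natrD natrB //; lra.
  rewrite (kap_bad _ _ g) size_xblk mulr0 subr0; by rewrite addn1.
have hO : (Ocum L K x y M)%:R = M%:R * (L + 1)%:R - e%:R * \sum_(j < M) (good j)%:R :> R.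
  rewrite /Ocum natr_sum.
  rewrite (eq_bigr (fun j : 'I_M => (L + 1)%:R - e%:R * (good j)%:R) (fun j _ => hsz j)).
  rewrite sumrB mulr_sumr.
  by rewrite sumr_const card_ord mulr_natl.
have hDv : forall j, Dv R c c' d (xblk L y j) (xblk L x j) <= L%:R * (good j)%:R + t.
  move=> j; rewrite /good.
  case: (boolP (t <= Dv R c c' d (xblk L y j) (xblk L x j))) => g.
    rewrite mulr1; have := Dv_le R c c' d (xblk L y j) (xblk L x j).
    rewrite size_xblk => h; lra.
  by rewrite mulr0 add0r; apply: ltW; rewrite ltNge.
have hsum : Dl (M * L) <= L%:R * \sum_(j < M) (good j)%:R + M%:R * t.
  rewrite /Dl -sum_blocks.
  have -> : \sum_(j < M) \sum_(j * L <= i < j * L + L) xi R c c' d (y i) (x i) =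
            \sum_(j < M) Dv R c c' d (xblk L y j) (xblk L x j).
    by apply: eq_bigr => j _; rewrite Dv_blk.
  apply: (le_trans (ler_sum _ (fun (j : 'I_M) _ => hDv j))).
  by rewrite big_split /= -mulr_sumr sumr_const card_ord !mulr_natl.
have hML : (M * L <= m n)%N by rewrite hM leq_trunc_div.
have hML2 : (m n - M * L < L)%N.
  by rewrite hM {1}(divn_eq (m n) L) addKn ltn_pmod.
have hstep := Dl_step hML.
have hd2 : (m n - M * L)%:R <= L%:R :> R by rewrite ler_nat ltnW.
have hmn : (M * L)%:R <= (m n)%:R :> R by rewrite ler_nat.
set g := \sum_(j < M) (good j)%:R in hO hsum.
have g0 : 0 <= g by apply: sumr_ge0 => j _.
rewrite hO; move: hsum hstep hd2 hmn hD; rewrite natrM => hsum hstep hd2 hmn hD.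
have hMe : e%:R <= M%:R :> R by rewrite ler_nat.
have hg : dl * M%:R < 2 * g + 2.
  have : L%:R * (dl * M%:R) < L%:R * (2 * g + 2).
    rewrite /t in hsum; nra.
  by rewrite ltr_pM2l.
have e0 : 0 <= e%:R :> R by [].
have H1 : 0 <= e%:R * (2 * g + 2 - dl * M%:R) by apply: mulr_ge0 => //; lra.
have H2 : 0 <= (e%:R * dl - 6) * M%:R by apply: mulr_ge0 => //; lra.
nra.
Qed.

End Main.

Lemma main_aux (R : realType) (A : finType) (x y : nat -> A) (c c' d : A)
  (m : nat -> nat) (l l' : R) :
  (forall n, (m n < m n.+1)%N) ->
  (fun n => @joint_freq R A x y c d (m n)) @ \oo --> l ->
  (fun n => @joint_freq R A x y c' d (m n)) @ \oo --> l' ->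
  (l' < l)%R -> (@rho R A x y < 1)%E.
Proof.
move=> mono h1 h2 ll.
pose dl : R := ((l - l') / 2)%R.
have dl0 : (0 < dl)%R by rewrite /dl; lra.
have hlt : (dl < l - l')%R by rewrite /dl; lra.
have hd : (fun n => joint_freq R x y c d (m n) - joint_freq R x y c' d (m n))%R
   @ \oo --> (l - l')%R by apply: cvgB.
have [N0 _ HN] := cvgr_gt _ hd _ hlt.
have HD : forall n, (N0 <= n)%N -> (0 < m n)%N -> (dl * (m n)%:R < Dl R x y c c' d (m n))%R.
  move=> n hn mn0; have := HN n hn; rewrite /= jf_diff.
  by rewrite ltr_pdivlMr ?ltr0n.
have cc : c != c'.
  apply/eqP => e; have := HN N0 (leqnn _); rewrite /= e subrr; lra.
pose k := kA A.
have k0 : (0 < k)%N := kA_gt0 c.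
pose e := (Num.trunc (6 / dl)%R).+1.
have he : (6 / dl < e%:R)%R by exact: truncnS_gt.
have e6 : (6 <= e%:R * dl)%R.
  by move: he; rewrite ltr_pdivrMr // => /ltW.
pose L := (e + Num.trunc (8 * (k ^ e)%:R / dl ^+ 2)%R).+1.
have L0 : (0 < L)%N by [].
have eL : (e <= L)%N by rewrite /L leqW // leq_addr.
have h8 : (8 * (k ^ e)%:R <= dl ^+ 2 * L%:R)%R.
  have := truncnS_gt (8 * (k ^ e)%:R / dl ^+ 2)%R.
  rewrite ltr_pdivrMr ?exprn_gt0 // => /ltW H; apply: (le_trans H).
  rewrite mulrC ler_pM2l ?exprn_gt0 // ler_nat /L ltnS.
  by rewrite leq_addl.
have HG := HG_bound c c' d dl0 L0 eL h8.
pose t : R := (dl * L%:R / 2)%R.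
pose K := kap c c' d L (L - e) t.
have Hsize : forall w u, size u = L -> (0 < size (K w u) <= L.+1)%N.
  move=> w u su; rewrite /K.
  case: (boolP (t <= Dv R c c' d w u))%R => g.
    by rewrite (kap_good HG su g) /= ltnS leq_subr.
  by rewrite (kap_bad _ _ g) su /=.
have Hinj : forall w u u' (f : nat -> A), size u = L -> size u' = L ->
  (forall i, (i < size (K w u))%N -> f i = nth c (K w u) i) ->
  (forall i, (i < size (K w u'))%N -> f i = nth c (K w u') i) -> u = u'.
  by move=> w u u' f su su' i1 i2; exact: (kap_inj cc HG su su' i1 i2).
have Ccomp := CT_compressor L0 Hsize Hinj.
have [z hz] := canon_run c L0 Hsize x y.
have rho_le : (@rho R A x y <= limn_einf (@run_ratio R A (lsC L c K x y)))%E.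
  apply: ereal_inf_lbound.
  exists _, (Cn (CT L c K)), (enum_rank \o qsC L c x y), (lsC L c K x y), z.
  by split; [exact: compressor_n|split; [exact: run_to_n|]].
have Lr0 : (0 < L%:R :> R)%R by rewrite ltr0n.
apply: (le_lt_trans rho_le); apply: (@le_lt_trans _ _ (1 - L%:R^-1)%:E).
  apply: liminf_le => N.
  pose n := (N0 + (N + e) * L)%N.
  pose M := (m n %/ L)%N.
  have hn : ((N + e) * L <= m n)%N by apply: (leq_trans _ (m_ge mono n)); rewrite leq_addl.
  have hM : (N + e <= M)%N by rewrite /M leq_divRL.
  exists (M * (L + L).+1)%N; split.
    by apply: (leq_trans (leq_trans (leq_addr e N) hM)); rewrite leq_pmulr.
  rewrite (ratio_at c L0 Hsize) lee_fin.
  have mn0 : (0 < m n)%N.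
    apply: (leq_trans _ hn); rewrite muln_gt0 L0 andbT addn_gt0 orbT //.
  have B := block_bound (n := n) L0 eL cc HG dl0 e6 (leq_trans (leq_addl N e) hM)
            erefl (HD n (leq_addr _ _) mn0).
  have ML0 : (0 < (M * L)%:R :> R)%R by rewrite ltr0n muln_gt0 L0 andbT (leq_trans _ hM) // addn_gt0 orbT.
  rewrite ler_pdivrMr //; apply: (le_trans B).
  have -> : ((1 - L%:R^-1) * (M * L)%:R = (M * L)%:R - M%:R :> R)%R.
    by rewrite natrM; field; rewrite lt0r_neq0.
  by [].
rewrite lte_fin; rewrite ltrBlDr ltrDl invr_gt0 //.
Qed.

Local Open Scope ring_scope.
Local Open Scope classical_set_scope.

Theorem proposition4 (R : realType) (A : finType) (x y : nat -> A) (c c' d : A)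
  (m : nat -> nat) :
  (forall n, (m n < m n.+1)%N) ->
  (exists l l' : R,
     (fun n => @joint_freq R A x y c d (m n)) @ \oo --> l /\
     (fun n => @joint_freq R A x y c' d (m n)) @ \oo --> l' /\
     l != l') ->
  (@rho R A x y < 1)%E.
Proof.
move=> mono [l [l' [h1 [h2 ll]]]].
case: (ltgtP l l') ll => // hl _.
  exact: (main_aux mono h2 h1 hl).
exact: (main_aux mono h1 h2 hl).
Qed.
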